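(* Let $G=(V,E)$ be a finite, undirected, connected graph with $V=\{1,\dots,n\}$ and $n\ge 3$. Then there exists a symmetric real $n\times n$ matrix $A=(a_{ij})$ such that: (1) $A$ is positive definite; (2) $a_{ij}\neq 0$ for all $i,j$; (3) for every $i$, $|a_{ii}|<\sum_{j\neq i}|a_{ij}|$; (4) $A_G$ is positive definite; (5) $A_G$ is not strictly diagonally dominant.
   Context: For a symmetric $n\times n$ real matrix $A=(a_{ij})$, $A_G$ is defined by $(A_G)_{ij}=a_{ij}$ if $i=j$ or $(i,j)\in E$, and $(A_G)_{ij}=0$ otherwise. A matrix $M=(m_{ij})$ is strictly diagonally dominant if $|m_{ii}|>\sum_{j\neq i}|m_{ij}|$ for every $i$. *)

(* Defs.v *)
From HB Require Import structures.
From mathcomp Require Import all_boot all_order all_algebra.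
From mathcomp Require Import reals.
Set Implicit Arguments. Unset Strict Implicit. Unset Printing Implicit Defensive.
Import Order.TTheory GRing.Theory Num.Theory.
Local Open Scope ring_scope.

(* A finite simple undirected graph on vertex set 'I_n (= {1,...,n} shifted
   to {0,...,n-1}) is given by a symmetric irreflexive edge relation e. *)
Definition simple_graph (n : nat) (e : rel 'I_n) : Prop :=
  symmetric e /\ irreflexive e.

Definition connected_graph (n : nat) (e : rel 'I_n) : Prop :=
  forall i j : 'I_n, connect e i j.

(* A_G : keep diagonal entries and entries a_ij with (i,j) an edge. *)
Definition graph_part (R : nzRingType) (n : nat) (e : rel 'I_n)
  (A : 'M[R]_n) : 'M[R]_n :=
  \matrix_(i, j) (if (i == j) || e i j then A i j else 0).

Definition posdef (R : realFieldType) (n : nat) (A : 'M[R]_n) : Prop :=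
  A^T = A /\ forall x : 'cV[R]_n, x != 0 -> 0 < (x^T *m A *m x) 0 0.

Definition strictly_diag_dominant (R : realFieldType) (n : nat)
  (M : 'M[R]_n) : Prop :=
  forall i : 'I_n, \sum_(j < n | j != i) `|M i j| < `|M i i|.

(* Main.v *)
Require Import Defs.
From HB Require Import structures.
From mathcomp Require Import all_boot all_order all_algebra.
From mathcomp Require Import reals.
From mathcomp Require Import zify ring lra.
Import Order.TTheory GRing.Theory Num.Theory.
Section G.
Variables (n : nat) (e : rel 'I_n).
Hypothesis hn : (3 <= n)%N.
Hypothesis esym : symmetric e.
Hypothesis eirr : irreflexive e.
Hypothesis hconn : connected_graph e.

Definition deg (i : 'I_n) := (\sum_(j | e i j) 1)%N.

Lemma deg2 i j k : e i j -> e i k -> j != k -> (2 <= deg i)%N.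
Proof.
move=> hj hk hjk; rewrite /deg (bigD1 j) //= (bigD1 k) /=; last by rewrite hk eq_sym.
by [].
Qed.

Arguments deg2 {i j k}.

Lemma three (a b : nat) : exists v, [&& (v < 3)%N, v != a & v != b].
Proof.
exists (if (a != 0%N) && (b != 0%N) then 0%N else if (a != 1%N) && (b != 1%N) then 1%N else 2%N).
by case: a b => [|[|[|a]]] [|[|[|b]]].
Qed.

Lemma other (i j : 'I_n) : exists k : 'I_n, k != i /\ k != j.
Proof.
have [v /and3P [h3 hi hj]] := three (val i) (val j).
have hv : (v < n)%N by lia.
by exists (Ordinal hv); split; apply/eqP => /(congr1 val) /= /eqP; apply/negP.
Qed.

Lemma has_nbr i : exists j, e i j.
Proof.
have [k [hk _]] := other i i.
have /connectP [p hp hl] := hconn i k.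
case: p hp hl => [|y p] /=; first by move=> _ hki; rewrite hki eqxx in hk.
by case/andP => hy _ _; exists y.
Qed.

Lemma L1 i j : e i j -> (2 <= deg i)%N || (2 <= deg j)%N.
Proof.
move=> hij; rewrite -[_ || _]negbK; apply/negP => /norP [hi hj].
have ni : forall y, e i y -> y = j.
  move=> y hy; apply/eqP; rewrite eq_sym; apply: contraNT hi => hne.
  exact: (deg2 hij hy hne).
have nj : forall y, e j y -> y = i.
  move=> y hy; apply/eqP; rewrite eq_sym; apply: contraNT hj => hne.
  by apply: (deg2 _ hy hne); rewrite esym.
have [k [hki hkj]] := other i j.
have /connectP [p hp hl] := hconn i k.
have key : forall p x, (x == i) || (x == j) -> path e x p ->
   (last x p == i) || (last x p == j).
  elim=> [|y q IH] x //= hx /andP [hxy hq]; apply: IH hq.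
  case/orP: hx => /eqP hx; subst x.
    by rewrite (ni _ hxy) eqxx orbT.
  by rewrite (nj _ hxy) eqxx.
by move: (key p i (introT orP (or_introl (eqxx i))) hp); rewrite -hl (negbTE hki) (negbTE hkj).
Qed.

Lemma ex_p : exists p, (2 <= deg p)%N.
Proof.
have h0 : (0 < n)%N by lia.
have [j hj] := has_nbr (Ordinal h0).
by case/orP: (L1 _ _ hj) => h; [exists (Ordinal h0)|exists j].
Qed.

Variables (p : 'I_n).
Hypothesis hp : (2 <= deg p)%N.

Definition M := (6 * n)%N.
Definition s (j : 'I_n) : nat :=
  if j == p then (3 * M)%N else if e p j then (2 * M)%N
  else if (2 <= deg j)%N then 3%N else 2%N.
Definition sig i := (\sum_(j | e i j) s j)%N.
Definition ns i := (\sum_(j | (j != i) && ~~ e i j) s j)%N.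

Lemma sge2 j : (2 <= s j)%N.
Proof. rewrite /s /M; case: ifP => _; [|case: ifP => _; [|case: ifP => _]]; lia. Qed.

Lemma sdeg j : (2 <= deg j)%N -> (3 <= s j)%N.
Proof. move=> h; rewrite /s /M h; case: ifP => _; [|case: ifP => _]; lia. Qed.

Lemma sig_deg i : (2 * deg i <= sig i)%N.
Proof.
rewrite /deg /sig big_distrr /=; apply: leq_sum => j _; rewrite muln1; exact: sge2.
Qed.

Lemma sig_nb i k : e i k -> (s k <= sig i)%N.
Proof. by move=> h; rewrite /sig (bigD1 k) //= leq_addr. Qed.

Lemma F1 i : (s i < sig i)%N.
Proof.
case: (eqVneq i p) => [->|hip].
  have -> : sig p = (2 * M * deg p)%N.
    rewrite /sig /deg big_distrr /=; apply: eq_bigr => j hj.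
    rewrite /s hj; case: eqP => [hjp|_]; last by rewrite muln1.
    by rewrite hjp eirr in hj.
  rewrite /s eqxx /M; nia.
case: (boolP (e p i)) => hpi.
  have := sig_nb i p; rewrite esym hpi => /(_ isT).
  rewrite /s (negbTE hip) hpi eqxx /M; lia.
case: (boolP (2 <= deg i)%N) => hd.
  have := sig_deg i; rewrite /s (negbTE hip) (negbTE hpi) hd; lia.
have [k hk] := has_nbr i.
have hdk : (2 <= deg k)%N by move: (L1 _ _ hk); rewrite (negbTE hd).
have := sig_nb i k hk; have := sdeg k hdk.
rewrite /s (negbTE hip) (negbTE hpi) (negbTE hd); lia.
Qed.

Lemma F2 : (2 * ns p + s p <= sig p)%N.
Proof.
have h1 : (ns p <= 3 * n)%N.
  rewrite /ns big_mkcond /=.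
  apply: (@leq_trans (\sum_(j < n) 3)%N).
    apply: leq_sum => j _; case: ifP => //= /andP [h1 h2].
    by rewrite /s (negbTE h1) (negbTE h2); case: ifP.
  by rewrite sum_nat_const card_ord mulnC.
have h2 : (2 * M * deg p <= sig p)%N.
  rewrite /sig /deg big_distrr /=; apply: leq_sum => j hj.
  rewrite /s hj; case: eqP => [hjp|_]; last by rewrite muln1.
  by rewrite hjp eirr in hj.
rewrite /s eqxx; move: h1 h2; rewrite /M; nia.
Qed.

Lemma ssplit i : (\sum_(j | j != i) s j = sig i + ns i)%N.
Proof.
rewrite (bigID (e i)) /=; congr (_ + _)%N.
apply: eq_bigl => j; case: (boolP (e i j)) => h; rewrite ?andbT ?andbF //.
by apply/eqP => hji; rewrite hji eirr in h.
Qed.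

End G.

Local Open Scope ring_scope.
Section Q.
Variables (R : realType) (n : nat).

Lemma qfE (M : 'M[R]_n) (x : 'cV[R]_n) :
  (x^T *m M *m x) 0 0 = \sum_i \sum_j x i 0 * M i j * x j 0.
Proof.
rewrite mxE; under eq_bigr do rewrite mxE big_distrl /=.
rewrite exchange_big; apply: eq_bigr => i _; apply: eq_bigr => j _.
by rewrite !mxE.
Qed.

Lemma pos_sum (w : 'I_n -> R) (x : 'cV[R]_n) :
  (forall i, 0 < w i) -> x != 0 -> 0 < \sum_i w i * x i 0 ^+ 2.
Proof.
move=> hw hx.
have [k hk] : exists k, x k 0 != 0.
  apply/existsP; apply: contraNT hx; rewrite negb_exists => /forallP h.
  apply/eqP/matrixP => i j; rewrite (ord1 j) !mxE; apply/eqP.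
  by have := h i; rewrite negbK.
rewrite (bigD1 k) //=; apply: ltr_pwDl.
  by apply: mulr_gt0 => //; rewrite lt0r sqrf_eq0 hk sqr_ge0.
apply: sumr_ge0 => i _; apply: mulr_ge0; [exact: ltW|exact: sqr_ge0].
Qed.

Lemma qf_bound (d r : 'I_n -> R) (N : 'I_n -> 'I_n -> bool) (x : 'cV[R]_n) :
  (forall i j, N i j = N j i) -> (forall i, 0 <= r i) ->
  \sum_i (d i - 2 * r i * \sum_j (N i j)%:R * r j) * x i 0 ^+ 2 <=
  \sum_i \sum_j x i 0 * ((i == j)%:R * d i + 2 * r i * r j
                           - 2 * (N i j)%:R * r i * r j) * x j 0.
Proof.
move=> hN hr.
set y := fun i => x i 0.
pose T := \sum_i \sum_j (N i j)%:R * r i * r j * (y i * y j).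
pose U := \sum_i \sum_j (N i j)%:R * r i * r j * y i ^+ 2.
pose Sy := \sum_i r i * y i.
have E1 : \sum_i \sum_j y i * ((i == j)%:R * d i + 2 * r i * r j
                           - 2 * (N i j)%:R * r i * r j) * y j
   = \sum_i d i * y i ^+ 2 + 2 * Sy ^+ 2 - 2 * T.
  have -> : \sum_i \sum_j y i * ((i == j)%:R * d i + 2 * r i * r j
                           - 2 * (N i j)%:R * r i * r j) * y j
     = \sum_i (\sum_j (i == j)%:R * (d i * y i * y j)
              + 2 * \sum_j (r i * y i) * (r j * y j)
              - 2 * \sum_j (N i j)%:R * r i * r j * (y i * y j)).
    apply: eq_bigr => i _; rewrite !mulr_sumr -big_split -sumrB /=.
    by apply: eq_bigr => j _; ring.
  rewrite sumrB big_split /= -!mulr_sumr; congr (_ + _ - _).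
    apply: eq_bigr => i _; rewrite (bigD1 i) //= eqxx mul1r big1 ?addr0.
      by rewrite expr2 mulrA.
    by move=> j hj; rewrite eq_sym (negbTE hj) mul0r.
  congr (_ * _); rewrite /Sy expr2 mulr_suml; apply: eq_bigr => i _.
  by rewrite mulr_sumr.
have E2 : \sum_i (d i - 2 * r i * \sum_j (N i j)%:R * r j) * y i ^+ 2
   = \sum_i d i * y i ^+ 2 - 2 * U.
  rewrite mulr_sumr -sumrB; apply: eq_bigr => i _.
  rewrite mulrBl; congr (_ - _); rewrite !mulr_sumr mulr_suml.
  apply: eq_bigr => j _; ring.
have hTU : T <= U.
  have h2 : 2 * T <= U + U.
    have -> : U + U = \sum_i \sum_j (N i j)%:R * r i * r j * (y i ^+ 2 + y j ^+ 2).
      have -> : \sum_i \sum_j (N i j)%:R * r i * r j * (y i ^+ 2 + y j ^+ 2) =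
          U + \sum_i \sum_j (N i j)%:R * r i * r j * y j ^+ 2.
        rewrite /U -big_split; apply: eq_bigr => i _; rewrite -big_split.
        by apply: eq_bigr => j _ /=; ring.
      congr (_ + _).
      rewrite /U exchange_big /=; apply: eq_bigr => i _; apply: eq_bigr => j _.
      by rewrite hN; ring.
    rewrite mulr_sumr; apply: ler_sum => i _; rewrite mulr_sumr; apply: ler_sum => j _.
    rewrite -subr_ge0.
    have -> : (N i j)%:R * r i * r j * (y i ^+ 2 + y j ^+ 2) -
       2 * ((N i j)%:R * r i * r j * (y i * y j)) =
       ((N i j)%:R * r i * r j) * (y i - y j) ^+ 2 by ring.
    apply: mulr_ge0; last exact: sqr_ge0.
    by apply: mulr_ge0; [apply: mulr_ge0|].
  lra.
move: E1 E2; rewrite /y /= => E1 E2; rewrite E2 E1.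
have : 0 <= Sy ^+ 2 by exact: sqr_ge0.
lra.
Qed.

End Q.
Arguments qfE {R n}.
Arguments pos_sum {R n}.
Arguments qf_bound {R n}.

Local Open Scope ring_scope.

Lemma natE (R : realType) (b : bool) (D si sj : nat) (N : bool) :
  (N -> ~~ b) ->
  ((if N then 0 else (if b then D else 0) + 2 * si * sj)%N%:R : R) =
  b%:R * D%:R + 2 * si%:R * sj%:R - 2 * N%:R * si%:R * sj%:R.
Proof.
case: N b => [] [] //= h; first by have := h isT.
all: rewrite ?(natrD, natrM, mul1r, mul0r, add0r, addr0, subr0).
all: ring.
Qed.

Theorem proposition1 (R : realType) (n : nat) (e : rel 'I_n) :
  (3 <= n)%N -> simple_graph e -> connected_graph e ->
  exists A : 'M[R]_n,
    [/\ posdef A,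
        (forall i j, A i j != 0),
        (forall i, `|A i i| < \sum_(j < n | j != i) `|A i j|),
        posdef (graph_part e A)
      & ~ strictly_diag_dominant (graph_part e A)].
Proof.
move=> hn [esym eirr] hconn.
have [p hp] := @ex_p n e hn esym hconn.
have hF1 := @F1 n e hn esym eirr hconn p hp.
have hF2 := @F2 n e hn eirr p hp.
have hsp := @ssplit n e eirr p.
have hs2 := @sge2 n e hn p hp.
set sw := s n e p in hF1 hF2 hsp hs2.
set sg := sig n e p in hF1 hF2 hsp.
set nb := ns n e p in hF2 hsp.
pose dl i := (2 * sw i * nb i + sw i * (sg i - sw i))%N.
pose a i j := ((if i == j then dl i else 0) + 2 * sw i * sw j)%N.
pose A := \matrix_(i, j) ((a i j)%:R : R).
have hsym : forall i j, a i j = a j i.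
  by move=> i j; rewrite /a eq_sym; case: eqP => [->|_] //; rewrite mulnAC.
have hs0 : forall i, (0 < sw i)%N by move=> i; have := hs2 i; lia.
have hw : forall i, (0 < sw i * (sg i - sw i))%N.
  by move=> i; rewrite muln_gt0 hs0 subn_gt0 hF1.
have hG : forall i j, graph_part e A i j =
   (if ~~ ((i == j) || e i j) then 0 else a i j)%N%:R.
  by move=> i j; rewrite !mxE; case: ifP.
have hNs : forall i, \sum_j (~~ ((i == j) || e i j))%:R * ((sw j)%:R : R) = (nb i)%:R.
  move=> i; rewrite /nb /ns /= natr_sum [RHS]big_mkcond /=; apply: eq_bigr => j _.
  rewrite negb_or eq_sym; case: ifP => _; by rewrite ?mul1r ?mul0r.
exists A; split.
- split.
    by apply/matrixP => i j; rewrite !mxE hsym.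
  move=> x hx; rewrite qfE.
  have E : forall i j, A i j = (i == j)%:R * (dl i)%:R + 2 * (sw i)%:R * (sw j)%:R
                      - 2 * false%:R * (sw i)%:R * (sw j)%:R.
    by move=> i j; rewrite mxE -natE.
  have -> : \sum_i \sum_j x i 0 * A i j * x j 0 = \sum_i \sum_j x i 0 *
      ((i == j)%:R * (dl i)%:R + 2 * (sw i)%:R * (sw j)%:R
                      - 2 * false%:R * (sw i)%:R * (sw j)%:R) * x j 0.
    by apply: eq_bigr => i _; apply: eq_bigr => j _; rewrite E.
  apply: (lt_le_trans _ (qf_bound (fun i => (dl i)%:R) (fun i => (sw i)%:R) (fun _ _ => false) x (fun _ _ => erefl) (fun i => ler0n _ _))).
  apply: pos_sum hx => i; rewrite big1 ?mulr0 ?subr0; last by move=> j _; rewrite mul0r.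
  by rewrite ltr0n /dl; have := hw i; lia.
- move=> i j; rewrite mxE pnatr_eq0 -lt0n /a.
  apply: (leq_trans _ (leq_addl _ _)); rewrite !muln_gt0 !hs0.
  by [].
- move=> i; rewrite mxE normr_nat.
  under eq_bigr do rewrite mxE normr_nat.
  rewrite -natr_sum ltr_nat.
  have -> : (\sum_(j | j != i) a i j = 2 * sw i * (sg i + nb i))%N.
    rewrite -hsp big_distrr /=; apply: eq_bigr => j hj.
    by rewrite /a eq_sym (negbTE hj).
  rewrite /a eqxx /dl; have := hF1 i; have := hs0 i.
  move: (sw i) (sg i) (nb i) => u v w; nia.
- split.
    apply/matrixP => i j; rewrite !hG mxE !hG eq_sym esym hsym //.
  move=> x hx; rewrite qfE.
  have E : forall i j, graph_part e A i j = (i == j)%:R * (dl i)%:R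
      + 2 * (sw i)%:R * (sw j)%:R
      - 2 * (~~ ((i == j) || e i j))%:R * (sw i)%:R * (sw j)%:R.
    move=> i j; rewrite hG -natE //.
    by rewrite negb_or => /andP [].
  have -> : \sum_i \sum_j x i 0 * graph_part e A i j * x j 0 = \sum_i \sum_j x i 0 *
      ((i == j)%:R * (dl i)%:R + 2 * (sw i)%:R * (sw j)%:R
      - 2 * (~~ ((i == j) || e i j))%:R * (sw i)%:R * (sw j)%:R) * x j 0.
    by apply: eq_bigr => i _; apply: eq_bigr => j _; rewrite E.
  apply: (lt_le_trans _ (qf_bound (fun i => (dl i)%:R) (fun i => (sw i)%:R) (fun i j => ~~ ((i == j) || e i j)) x _ _)); first last.
  + by move=> i; exact: ler0n.
  + by move=> i j; rewrite eq_sym esym.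
  apply: pos_sum hx => i; rewrite hNs.
  have -> : (dl i)%:R - 2 * (sw i)%:R * (nb i)%:R = (sw i * (sg i - sw i))%N%:R :> R.
    by rewrite /dl natrD !natrM addrC addKr.
  by rewrite ltr0n hw.
- move=> /(_ p); rewrite hG normr_nat.
  under eq_bigr do rewrite hG normr_nat.
  rewrite -natr_sum ltr_nat.
  have -> : (\sum_(j | j != p) (if ~~ ((p == j) || e p j) then 0 else a p j)
            = 2 * sw p * sg p)%N.
    rewrite (eq_bigr (fun j => if e p j then 2 * sw p * sw j else 0)%N); last first.
      move=> j hj; have hpj : (p == j) = false by rewrite eq_sym (negbTE hj).
      by rewrite hpj /a hpj; case: (e p j).
    rewrite -big_mkcondr /= (eq_bigl (fun j => e p j)); last first.
      move=> j; case h: (e p j); rewrite ?andbT ?andbF //.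
      by apply/eqP => hjp; rewrite hjp eirr in h.
    by rewrite /sg /sig big_distrr.
  rewrite eqxx /= /a eqxx /dl; have := hF1 p; have := hF2; have := hs0 p.
  move: (sw p) (sg p) (nb p) => u v w; nia.
Qed.
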